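(* Let $\Gamma_{\mathcal{W}}$ and $t_\lambda$ be as in the context. The stabilizer of $\infty$ in $\Gamma_{\mathcal{W}}$ is the cyclic group generated by $t_\lambda$.
   Context: $\Gamma$ is a geometrically finite, non-cocompact Fuchsian group acting on the upper half-plane $\mathbb{H}$, containing hyperbolic but no parabolic elements, with $\Gamma\backslash\mathbb{H}$ of infinite area, and whose ordinary set contains a neighborhood of $\infty$. For $g=\begin{bmatrix}a&b\\c&d\end{bmatrix}\in\Gamma\setminus\{\mathrm{id}\}$ let $\mathrm{I}(g)=\{z\in\mathbb{H}:|cz+d|=1\}$, $\mathrm{ext}\,\mathrm{I}(g)=\{z:|cz+d|>1\}$, $\mathcal{K}=\bigcap_{g\ne\mathrm{id}}\mathrm{ext}\,\mathrm{I}(g)$; $\Gamma_{\mathrm{REL}}$ is the set of $g$ such that $\mathrm{I}(g)\cap\partial\mathcal{K}$ contains more than one point. With $\mathrm{pr}_\infty(x+iy)=x$, let $\alpha$ (resp. $\beta$) be the largest (resp. smallest) real number with $\partial\mathcal{K}\subseteq\mathrm{pr}_\infty^{-1}([\alpha,\beta])$, fix $\alpha'<\alpha$, $\beta'>\beta$, $\lambda=\beta'-\alpha'$, $t_\lambda=\begin{bmatrix}1&\lambda\\0&1\end{bmatrix}$, and $\mathcal{W}=\mathcal{K}\cap\mathrm{pr}_\infty^{-1}((\alpha',\beta'))$. $\Gamma_{\mathcal{W}}$ is the group generated by $\Gamma_{\mathrm{REL}}\cup\{t_\lambda\}$; it is a Fuchsian group having $\mathcal{W}$ as a fundamental domain.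 *)

(* Defs.v *)
From mathcomp Require Import all_boot all_order all_algebra.
From mathcomp Require Import all_classical all_reals all_analysis.
Set Implicit Arguments. Unset Strict Implicit. Unset Printing Implicit Defensive.
Import Order.TTheory GRing.Theory Num.Theory.
Local Open Scope classical_set_scope.
Local Open Scope ring_scope.

Section Defs.
Variable R : realType.

(* ---------- 2x2 real matrices; PSL(2,R) is modelled by SL(2,R) modulo +-1 *)
Record mat := Mat { ma : R; mb : R; mc : R; md : R }.

Definition mdet (g : mat) : R := ma g * md g - mb g * mc g.
Definition mid : mat := Mat 1 0 0 1.
Definition mneg (g : mat) : mat := Mat (- ma g) (- mb g) (- mc g) (- md g).
Definition mmul (g h : mat) : mat :=
  Mat (ma g * ma h + mb g * mc h) (ma g * mb h + mb g * md h)
      (mc g * ma h + md g * mc h) (mc g * mb h + md g * md h).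
(* inverse of a determinant-one matrix *)
Definition minv (g : mat) : mat := Mat (md g) (- mb g) (- mc g) (ma g).

Definition mpow (g : mat) (n : int) : mat :=
  match n with
  | Posz k => iter k (mmul g) mid
  | Negz k => iter k.+1 (mmul (minv g)) mid
  end.

(* the identity of PSL(2,R): the matrices +-I *)
Definition is_id (g : mat) : Prop := g = mid \/ g = mneg mid.

(* ---------- the upper half-plane, points z = x + i y encoded as (x, y) *)
Definition inH (z : R * R) : Prop := 0 < z.2.

(* Moebius action z |-> (a z + b) / (c z + d) *)
Definition act (g : mat) (z : R * R) : R * R :=
  let x := z.1 in let y := z.2 in
  let den := (mc g * x + md g) ^+ 2 + (mc g * y) ^+ 2 in
  (((ma g * x + mb g) * (mc g * x + md g) + ma g * mc g * y ^+ 2) / den,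
   mdet g * y / den).

(* g fixes the point infinity of the extended real line: g(oo) = oo *)
Definition fixes_inf (g : mat) : Prop := mc g = 0.

Definition dist2 (z w : R * R) : R := (z.1 - w.1) ^+ 2 + (z.2 - w.2) ^+ 2.

Definition closH (F : R * R -> Prop) (z : R * R) : Prop :=
  inH z /\ forall e : R, 0 < e -> exists w, F w /\ dist2 w z < e.
Definition intH (F : R * R -> Prop) (z : R * R) : Prop :=
  inH z /\ exists e : R, 0 < e /\ forall w, inH w -> dist2 w z < e -> F w.
Definition bdH (F : R * R -> Prop) (z : R * R) : Prop :=
  closH F z /\ ~ intH F z.

(* Gamma is (the full preimage in SL(2,R) of) a subgroup of PSL(2,R) *)
Definition psl_subgroup (G : mat -> Prop) : Prop :=
  [/\ forall g, G g -> mdet g = 1,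
      G mid, G (mneg mid),
      forall g h, G g -> G h -> G (mmul g h) &
      forall g, G g -> G (minv g)].

Definition discrete (G : mat -> Prop) : Prop :=
  exists e : R, 0 < e /\ forall g, G g -> g <> mid ->
    ~ [/\ `|ma g - 1| < e, `|mb g| < e, `|mc g| < e & `|md g - 1| < e].

Definition fuchsian (G : mat -> Prop) : Prop := psl_subgroup G /\ discrete G.

Definition hyperbolic (g : mat) : Prop := 2 < `|ma g + md g|.
Definition parabolic (g : mat) : Prop := `|ma g + md g| = 2 /\ ~ is_id g.

Definition fundamental_domain (G : mat -> Prop) (F : R * R -> Prop) : Prop :=
  [/\ forall z, F z -> inH z,
      forall g z, G g -> ~ is_id g -> F z -> ~ F (act g z) &
      forall z, inH z -> exists g, G g /\ closH F (act g z)].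

(* open hyperbolic half-planes: bounded by a vertical geodesic or by a
   geodesic semicircle centred on the real axis *)
Inductive hhalf := HLeft of R | HRight of R | HDiskIn of R & R | HDiskOut of R & R.

Definition in_hhalf (h : hhalf) (z : R * R) : Prop :=
  match h with
  | HLeft c => z.1 < c
  | HRight c => c < z.1
  | HDiskIn c r => 0 < r /\ (z.1 - c) ^+ 2 + z.2 ^+ 2 < r ^+ 2
  | HDiskOut c r => 0 < r /\ r ^+ 2 < (z.1 - c) ^+ 2 + z.2 ^+ 2
  end.

(* finite-sided convex hyperbolic polygon = finite intersection of open
   hyperbolic half-planes *)
Fixpoint in_all_hhalf (hs : seq hhalf) (z : R * R) : Prop :=
  match hs with
  | [::] => True
  | h :: hs' => in_hhalf h z /\ in_all_hhalf hs' z
  end.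
Definition polygon (hs : seq hhalf) (z : R * R) : Prop :=
  inH z /\ in_all_hhalf hs z.

Definition geometrically_finite (G : mat -> Prop) : Prop :=
  exists hs : seq hhalf, fundamental_domain G (polygon hs).

(* Gamma \ H is not compact: no compact subset of H (every compact subset
   of H lies in such a box) meets every orbit *)
Definition non_cocompact (G : mat -> Prop) : Prop :=
  ~ exists M d : R, 0 < d /\ forall z, inH z -> exists g, G g /\
      [/\ `|(act g z).1| <= M, d <= (act g z).2 & (act g z).2 <= M].

Definition harea (F : set (R * R)) : \bar R :=
  (\int[(@lebesgue_measure R \x @lebesgue_measure R)%E]_(p in F)
      ((p.2 ^- 2)%:E))%E.

Definition infinite_area (G : mat -> Prop) : Prop :=
  exists F : R * R -> Prop, fundamental_domain G F /\
    measurable (F : set (R * R)) /\ harea F = +oo%E.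

(* limit set: accumulation points in R u {oo} of an orbit G z, z in H *)
Definition limit_point_real (G : mat -> Prop) (x : R) : Prop :=
  exists z, inH z /\ exists u : nat -> mat, (forall n, G (u n)) /\
    injective (fun n => act (u n) z) /\
    forall e : R, 0 < e -> exists N, forall n, (N <= n)%N ->
      dist2 (act (u n) z) (x, 0) < e.

Definition limit_point_inf (G : mat -> Prop) : Prop :=
  exists z, inH z /\ exists u : nat -> mat, (forall n, G (u n)) /\
    injective (fun n => act (u n) z) /\
    forall M : R, exists N, forall n, (N <= n)%N ->
      M < dist2 (act (u n) z) (0, 0).

(* the ordinary set (complement of the limit set in R u {oo}) contains a
   neighbourhood {oo} u {x : |x| > M} of oo *)
Definition ordinary_nbhd_inf (G : mat -> Prop) : Prop :=
  exists M : R, ~ limit_point_inf G /\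
    forall x : R, M < `|x| -> ~ limit_point_real G x.

Definition cz_d2 (g : mat) (z : R * R) : R :=
  (mc g * z.1 + md g) ^+ 2 + (mc g * z.2) ^+ 2.

Definition Icirc (g : mat) (z : R * R) : Prop := inH z /\ cz_d2 g z = 1.
Definition extI (g : mat) (z : R * R) : Prop := inH z /\ 1 < cz_d2 g z.

Definition Kset (G : mat -> Prop) (z : R * R) : Prop :=
  inH z /\ forall g, G g -> ~ is_id g -> extI g z.

Definition Gamma_REL (G : mat -> Prop) (g : mat) : Prop :=
  G g /\ ~ is_id g /\
  exists z1 z2, z1 <> z2 /\ Icirc g z1 /\ bdH (Kset G) z1 /\
                Icirc g z2 /\ bdH (Kset G) z2.

(* alpha largest / beta smallest with  bd K  in  pr^-1([alpha, beta]) *)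
Definition lb_bdK (G : mat -> Prop) (a : R) : Prop :=
  forall z, bdH (Kset G) z -> a <= z.1.
Definition ub_bdK (G : mat -> Prop) (b : R) : Prop :=
  forall z, bdH (Kset G) z -> z.1 <= b.

Definition tmat (l : R) : mat := Mat 1 l 0 1.

(* subgroup of PSL(2,R) generated by S (as a +-closed subset of SL(2,R)) *)
Inductive gen (S : mat -> Prop) : mat -> Prop :=
| gen_id : gen S mid
| gen_negid : gen S (mneg mid)
| gen_mul : forall g h, S g -> gen S h -> gen S (mmul g h)
| gen_invmul : forall g h, S g -> gen S h -> gen S (mmul (minv g) h).

Definition Gamma_W (G : mat -> Prop) (l : R) : mat -> Prop :=
  gen (fun g => Gamma_REL G g \/ g = tmat l).

End Defs.

(* Main.v *)
Require Import Defs.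
From mathcomp Require Import all_boot all_order all_algebra.
From mathcomp Require Import all_classical all_reals all_analysis.
From mathcomp Require Import ring lra zify.
Import Order.TTheory GRing.Theory Num.Theory.
Local Open Scope ring_scope.
Set Implicit Arguments. Unset Strict Implicit.

Section S.
Variable R : realType.
Implicit Types (g h : mat R) (z : R * R).
Local Notation mid := (Defs.mid R).

Lemma den_pos (g : mat R) (x y : R) : mdet g = 1 -> 0 < y ->
  0 < (mc g * x + md g) ^+ 2 + (mc g * y) ^+ 2.
Proof.
case: g => a b c d /=; rewrite /mdet /= => hd hy.
have [c0|hc] := eqVneq c 0.
  have hd0 : d != 0 by apply/eqP=> d0; move: hd; rewrite d0 c0 !mulr0 subr0 => /eqP; rewrite eq_sym oner_eq0.
  rewrite c0 !mul0r add0r expr0n /= addr0 exprn_even_gt0 //.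
have : 0 < (c * y) ^+ 2 by rewrite exprn_even_gt0 //= mulf_neq0 // gt_eqF.
have := sqr_ge0 (c * x + d); lra.
Qed.

Lemma act_mul g h z : mdet g = 1 -> mdet h = 1 -> 0 < z.2 ->
  act (mmul g h) z = act g (act h z).
Proof.
move=> dg dh hy.
have hh := den_pos z.1 dh hy.
have hgh : 0 < (act h z).2.
  by rewrite /act /= dh mul1r divr_gt0.
have hg := den_pos (act h z).1 dg hgh.
case: z hy hh hg hgh => x y /= hy hh hg hgh.
move: hg hgh.
case: g dg => a b c d; case: h dh hh => a' b' c' d' /=; rewrite /mdet /= => dh hh dg.
rewrite /act /mdet /=.
set D := (c' * x + d') ^+ 2 + (c' * y) ^+ 2 in hh *.
move=> hg hgh.
have hD : D != 0 by rewrite gt_eqF.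
set N := (a' * x + b') * (c' * x + d') + a' * c' * y ^+ 2.
set E := (c * (N / D) + d) ^+ 2 + (c * ((a' * d' - b' * c') * y / D)) ^+ 2.
have hE : E != 0 by rewrite gt_eqF.
have key : E * D = ((c * a' + d * c') * x + (c * b' + d * d')) ^+ 2 + ((c * a' + d * c') * y) ^+ 2.
  rewrite /E /N /D; field. by [].
rewrite -key /E /N.
rewrite -/N -/E; move: E hE key => E hE _; rewrite /N /D.
congr pair; field; by apply/andP.
Qed.

Lemma mat_eq (g h : mat R) : ma g = ma h -> mb g = mb h -> mc g = mc h -> md g = md h -> g = h.
Proof. by case: g => ????; case: h => ???? /= -> -> -> ->. Qed.

Lemma mmulA g h k : mmul g (mmul h k) = mmul (mmul g h) k.
Proof. apply: mat_eq => /=; ring. Qed.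

Lemma mul1m g : mmul mid g = g.
Proof. apply: mat_eq => /=; ring. Qed.

Lemma mulm1 g : mmul g mid = g.
Proof. apply: mat_eq => /=; ring. Qed.

Lemma mulVm g : mdet g = 1 -> mmul (minv g) g = mid.
Proof. case: g => a b c d; rewrite /mdet /= => h; apply: mat_eq => /=; rewrite -?h; ring. Qed.

Lemma mulmV g : mdet g = 1 -> mmul g (minv g) = mid.
Proof. case: g => a b c d; rewrite /mdet /= => h; apply: mat_eq => /=; rewrite -?h; ring. Qed.

Lemma minvK g : minv (minv g) = g.
Proof. by case: g => a b c d; rewrite /minv /= !opprK. Qed.

Lemma mdetM g h : mdet (mmul g h) = mdet g * mdet h.
Proof. rewrite /mdet /=; ring. Qed.

Lemma mdetV g : mdet (minv g) = mdet g.
Proof. rewrite /mdet /=; ring. Qed.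

Lemma mnegE g : mneg g = mmul (mneg mid) g.
Proof. apply: mat_eq => /=; ring. Qed.

Lemma mmulNr g h : mmul g (mneg h) = mneg (mmul g h).
Proof. apply: mat_eq => /=; ring. Qed.

Lemma mmulNl g h : mmul (mneg g) h = mneg (mmul g h).
Proof. apply: mat_eq => /=; ring. Qed.

Lemma mnegK g : mneg (mneg g) = g.
Proof. apply: mat_eq => /=; ring. Qed.

Lemma mdetN g : mdet (mneg g) = mdet g.
Proof. rewrite /mdet /=; ring. Qed.

Lemma act_neg g z : act (mneg g) z = act g z.
Proof. rewrite /act /mdet /=; congr pair; congr (_ / _); ring. Qed.

Lemma act_id z : act mid z = z.
Proof. by case: z => x y; rewrite /act /mdet /=; congr pair; field. Qed.

Lemma act2 g z : (act g z).2 = mdet g * z.2 / cz_d2 g z.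
Proof. by []. Qed.

Lemma act1 g z : (act g z).1 =
  ((ma g * z.1 + mb g) * (mc g * z.1 + md g) + ma g * mc g * z.2 ^+ 2) / cz_d2 g z.
Proof. by []. Qed.

Lemma cz_pos g z : mdet g = 1 -> 0 < z.2 -> 0 < cz_d2 g z.
Proof. by move=> h1 h2; apply: den_pos. Qed.

Lemma act_inH g z : mdet g = 1 -> 0 < z.2 -> 0 < (act g z).2.
Proof. by move=> h1 h2; rewrite act2 h1 mul1r divr_gt0 // cz_pos. Qed.

Definition T (l : R) (n : int) := tmat (n%:~R * l).

Lemma tmatD (a b : R) : mmul (tmat a) (tmat b) = tmat (a + b).
Proof. apply: mat_eq => /=; ring. Qed.

Lemma TD (l : R) m n : mmul (T l m) (T l n) = T l (m + n).
Proof. by rewrite /T tmatD intrD mulrDl. Qed.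

Lemma T0 (l : R) : T l 0 = mid.
Proof. by apply: mat_eq => /=; rewrite ?mul0r. Qed.

Lemma detT (l : R) n : mdet (T l n) = 1.
Proof. rewrite /mdet /=; ring. Qed.

Lemma minv_tmat (a : R) : minv (tmat a) = tmat (- a).
Proof. by rewrite /minv /= !oppr0. Qed.

Lemma T1 (l : R) : T l 1 = tmat l.
Proof. by rewrite /T mul1r. Qed.

Lemma Tm1 (l : R) : T l (-1) = tmat (- l).
Proof. by rewrite /T mulN1r. Qed.

Lemma mpowT (l : R) n : mpow (tmat l) n = T l n.
Proof.
case: n => k /=.
  elim: k => [|k IH] /=; first by rewrite -(T0 l).
  by rewrite IH -T1 TD; congr T; lia.
rewrite NegzE.
elim: k => [|k IH] /=.
  by rewrite mulm1 minv_tmat /T; congr tmat; rewrite mulN1r.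
rewrite IH minv_tmat -Tm1 TD; congr T.
Qed.

Lemma actT (l : R) n z : act (T l n) z = (z.1 + n%:~R * l, z.2).
Proof. by case: z => x y; rewrite /act /mdet /=; congr pair; field. Qed.

Lemma minv_mid : minv mid = mid.
Proof. by rewrite /minv /= !oppr0. Qed.

Lemma minv_negmid : minv (mneg mid) = mneg mid.
Proof. by apply: mat_eq => /=; rewrite ?opprK ?oppr0. Qed.

Section Grp.
Variable G : mat R -> Prop.
Hypothesis hG : psl_subgroup G.

Lemma Gdet g : G g -> mdet g = 1.
Proof. by case: hG => h _ _ _ _; apply: h. Qed.
Lemma Gmul g h : G g -> G h -> G (mmul g h).
Proof. by case: hG => _ _ _ hm _; apply: hm. Qed.
Lemma Ginv g : G g -> G (minv g).
Proof. by case: hG => _ _ _ _ h; apply: h. Qed.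
Lemma Gneg g : G g -> G (mneg g).
Proof. by move=> hg; rewrite mnegE; apply: Gmul => //; case: hG. Qed.

Definition GN g := G g /\ ~ is_id g.

Lemma GN_inv g : GN g -> GN (minv g).
Proof.
move=> [hg hn]; split; first exact: Ginv.
move=> [h|h]; apply: hn; rewrite -(minvK g) h ?minv_mid ?minv_negmid; [left|right] => //.
Qed.

Lemma GN_neg g : GN g -> GN (mneg g).
Proof.
move=> [hg hn]; split; first exact: Gneg.
move=> [h|h]; apply: hn; rewrite -(mnegK g) h ?mnegK; [right|left] => //.
Qed.

Lemma K_disj z g : Kset G z -> GN g -> ~ Kset G (act g z).
Proof.
move=> [hz hK] [hg hn] [hz' hK'].
have dg := Gdet hg.
have [_ e1] := hK g hg hn.
have gi : GN (minv g) by apply: GN_inv.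
have [_ e2] := hK' (minv g) gi.1 gi.2.
have : act (minv g) (act g z) = z by rewrite -act_mul ?mdetV // mulVm // act_id.
move=> back.
have h1 : (act g z).2 < z.2.
  rewrite act2 dg mul1r ltr_pdivrMr ?(lt_trans ltr01) //.
  by rewrite -[X in X < _]mulr1 ltr_pM2l.
have h2 : (act (minv g) (act g z)).2 < (act g z).2.
  rewrite act2 mdetV dg mul1r ltr_pdivrMr ?(lt_trans ltr01) //.
  by rewrite -[X in X < _]mulr1 ltr_pM2l.
by move: h2; rewrite back; lra.
Qed.


Variable l : R.

Inductive NA : mat R -> Prop :=
| NA1 g : GN g -> NA g
| NAc g n u : GN g -> n != 0 -> NA u -> NA (mmul g (mmul (T l n) u)).

Definition NF h := (exists n, h = T l n \/ h = mneg (T l n)) \/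
  (exists p q u, NA u /\ h = mmul (T l p) (mmul u (T l q))).

Lemma NA_neg u : NA u -> NA (mneg u).
Proof.
case=> [g hg|g n u' hg hn hu]; first by apply: NA1; apply: GN_neg.
by rewrite -mmulNl; apply: NAc => //; apply: GN_neg.
Qed.

Lemma NF_T k h : NF h -> NF (mmul (T l k) h).
Proof.
case=> [[n [->|->]]|[p [q [u [hu ->]]]]].
- by left; exists (k + n); left; rewrite TD.
- by left; exists (k + n); right; rewrite mmulNr TD.
- by right; exists (k + p), q, u; split => //; rewrite mmulA TD.
Qed.

Lemma NF_G g h : GN g -> NF h -> NF (mmul g h).
Proof.
move=> hg.
case=> [[n [->|->]]|[p [q [u [hu ->]]]]].
- by right; exists 0, n, g; split; [apply: NA1|rewrite T0 mul1m].
- right; exists 0, n, (mneg g); split; first by apply: NA1; apply: GN_neg.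
  by rewrite T0 mul1m mmulNr mmulNl.
- have [p0|pn0] := eqVneq p 0.
    rewrite p0 T0 mul1m mmulA.
    case: hu => [g1 hg1|g1 n u' hg1 hn hu'].
      have [hi|hni] := pselect (is_id (mmul g g1)).
        left; exists q; case: hi => ->; [left; exact: mul1m|right; rewrite mmulNl mul1m //].
      right; exists 0, q, (mmul g g1); split; last by rewrite T0 mul1m.
      by apply: NA1; split => //; apply: Gmul; [case: hg|case: hg1].
    rewrite mmulA.
    have [hi|hni] := pselect (is_id (mmul g g1)).
      case: hi => ->.
        by right; exists n, q, u'; split => //; rewrite mul1m -mmulA.
      right; exists n, q, (mneg u'); split; first exact: NA_neg.
      by rewrite mmulNl mul1m mmulNl mmulNl mmulNr mmulA.
    right; exists 0, q, (mmul (mmul g g1) (mmul (T l n) u')); split; last by rewrite T0 mul1m.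
    apply: NAc => //; split; last by [].
    by apply: Gmul; [case: hg|case: hg1].
  right; exists 0, q, (mmul g (mmul (T l p) u)); split; first exact: NAc.
  by rewrite T0 mul1m !mmulA.
Qed.

Lemma gen_NF h : Gamma_W G l h -> NF h.
Proof.
elim=> [||g h' hs _ IH|g h' hs _ IH].
- by left; exists 0; left; rewrite T0.
- by left; exists 0; right; rewrite T0.
- case: hs => [[hg [hn _]]|->]; first by apply: NF_G.
  by rewrite -T1; apply: NF_T.
- case: hs => [[hg [hn _]]|->]; first by apply: NF_G => //; apply: GN_inv.
  by rewrite minv_tmat -Tm1; apply: NF_T.
Qed.

Lemma T_in_W n : Gamma_W G l (T l n) /\ Gamma_W G l (mneg (T l n)).
Proof.
have step : forall k : nat, Gamma_W G l (T l k) /\ Gamma_W G l (mneg (T l k)).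
  elim=> [|k [h1 h2]]; first by rewrite T0; split; constructor.
  have e : T l k.+1 = mmul (tmat l) (T l k) by rewrite -T1 TD; congr T; lia.
  rewrite e -mmulNr; split; apply: gen_mul => //; by right.
have stepN : forall k : nat, Gamma_W G l (T l (- k%:Z)) /\ Gamma_W G l (mneg (T l (- k%:Z))).
  elim=> [|k [h1 h2]]; first by rewrite oppr0 T0; split; constructor.
  have e : T l (- k.+1%:Z) = mmul (minv (tmat l)) (T l (- k%:Z)).
    by rewrite minv_tmat -Tm1 TD; congr T; lia.
  rewrite e -mmulNr; split; apply: gen_invmul => //; by right.
case: n => k; first exact: step.
rewrite NegzE; exact: stepN.
Qed.

Lemma NA_det u : NA u -> mdet u = 1.
Proof.
elim=> [g [hg _]|g n u' [hg _] _ _ IH]; first exact: Gdet.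
by rewrite !mdetM detT IH (Gdet hg) !mul1r.
Qed.

Variables alpha beta alpha' beta' : R.
Hypothesis ha' : alpha' < alpha.
Hypothesis hb' : beta < beta'.
Hypothesis hl : l = beta' - alpha'.
Hypothesis KL : forall z, 0 < z.2 -> z.1 < alpha \/ beta < z.1 -> Kset G z.

Definition X1 z := 0 < z.2 /\ ~ Kset G z.
Definition X2 z := 0 < z.2 /\ (z.1 < alpha' \/ beta' < z.1).

Lemma X1_bd z : X1 z -> alpha <= z.1 /\ z.1 <= beta.
Proof.
move=> [hz hk]; split; rewrite leNgt; apply/negP => h; apply: hk; apply: KL => //; tauto.
Qed.

Lemma GX g z : GN g -> X2 z -> X1 (act g z).
Proof.
move=> hg [hz h2]; split; first by apply: act_inH => //; apply: Gdet; case: hg.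
have hk : Kset G z.
  apply: KL => //; case: h2 => h; [left; exact: lt_trans h ha'|right; exact: lt_trans hb' h].
exact: (K_disj hk hg).
Qed.

Lemma TX n z : n != 0 -> X1 z -> X2 (act (T l n) z).
Proof.
move=> hn hz; have [h1 h2] := X1_bd hz.
have lpos : 0 < l. rewrite hl. have h3 := le_trans h1 h2. move: ha' hb' h3. lra.
case: hz => hy _; rewrite actT /X2 /=; split => //.
have [hneg|hpos] := ltP n 0.
  left; have : n <= -1 by move: hneg; lia.
  rewrite -(ler_int R) => /(ler_wpM2r (ltW lpos)); rewrite mulN1r => hle.
  move: hle lpos h1 h2 ha' hb'; rewrite hl; lra.
right; have : 1 <= n by move: hn hpos; lia.
rewrite -(ler_int R) => /(ler_wpM2r (ltW lpos)); rewrite mul1r => hle.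
move: hle lpos h1 h2 ha' hb'; rewrite hl; lra.
Qed.

Lemma NA_map u z : NA u -> X2 z -> X1 (act u z).
Proof.
move=> hu; elim: hu z => [g hg|g n u' hg hn hu IH] z hz; first exact: GX.
have hy := hz.1.
rewrite act_mul ?mdetM ?detT ?(NA_det hu) ?mul1r //; last by apply: Gdet; case: hg.
rewrite act_mul ?detT ?(NA_det hu) //.
apply: GX => //; apply: TX => //; exact: IH.
Qed.

Lemma NA_nofix u : NA u -> mc u = 0 -> False.
Proof.
move=> hu hc.
have hd := NA_det hu; move: hd; rewrite /mdet hc mulr0 subr0 => had.
have a0 : ma u != 0 by apply/eqP => a0; move: had; rewrite a0 mul0r => /eqP; rewrite eq_sym oner_eq0.
have d0 : md u != 0 by apply/eqP => d0; move: had; rewrite d0 mulr0 => /eqP; rewrite eq_sym oner_eq0.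
have hdinv : ma u = (md u)^-1 by apply: (mulIf d0); rewrite had mulVf.
set a := ma u in a0 had hdinv *; set b := mb u; set d := md u in d0 had hdinv *.
pose x : R := `|beta'| + 1 + (`|beta| + `|a * b| + 1) / a ^+ 2.
have hX2 : X2 (x, 1).
  split => //=; right; rewrite /x.
  have : 0 <= (`|beta| + `|a * b| + 1) / a ^+ 2.
    by apply: divr_ge0; rewrite ?sqr_ge0 // addr_ge0 // addr_ge0.
  have := ler_norm beta'; lra.
have [_ hle] := X1_bd (NA_map hu hX2).
have hre : (act u (x, 1)).1 = a * (a * x + b).
  rewrite act1 /cz_d2 hc /= -/a -/b -/d hdinv; field.
  by [].
have ha2 : 0 < a ^+ 2 by rewrite exprn_even_gt0.
have hax : a ^+ 2 * x = a ^+ 2 * (`|beta'| + 1) + (`|beta| + `|a * b| + 1).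
  rewrite /x; field; by [].
have e1 : a * (a * x + b) = a ^+ 2 * x + a * b by rewrite expr2; ring.
move: hle; rewrite hre e1 hax.
have : 0 <= a ^+ 2 * (`|beta'| + 1) by rewrite mulr_ge0 // ?sqr_ge0 // addr_ge0.
have := ler_norm beta; have := ler_norm (- (a * b)); rewrite normrN.
lra.
Qed.
End Grp.

Section Sup.
Variable G : mat R -> Prop.
Hypothesis HighK : forall x : R, exists Y : R, forall y, Y <= y -> Kset G (x, y).

Lemma small_delta (e : R) : 0 < e -> 0 < e / (e + 2) /\ (e / (e + 2)) ^+ 2 < e.
Proof.
move=> he.
have h2 : 0 < e + 2 by lra.
have d0 : 0 < e / (e + 2) by apply: divr_gt0.
have d1 : e / (e + 2) < 1 by rewrite ltr_pdivrMr // mul1r; lra.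
have d2 : e / (e + 2) < e by rewrite ltr_pdivrMr //; nra.
split => //; rewrite expr2.
have : e / (e + 2) * (e / (e + 2)) < e / (e + 2) * 1 by rewrite ltr_pM2l.
lra.
Qed.

Lemma bd_from_ray x0 y0 : 0 < y0 -> ~ Kset G (x0, y0) ->
  exists y, bdH (Kset G) (x0, y).
Proof.
move=> hy0 hK0.
pose A : set R := fun y => 0 < y /\ ~ Kset G (x0, y).
have [Y hY] := HighK x0.
have hsup : has_sup A.
  split; first by exists y0.
  exists Y => y [hy hk]; rewrite leNgt; apply/negP => hlt; apply: hk; apply: hY.
  exact: ltW.
have ub := sup_upper_bound hsup.
set s := sup A in ub.
have hs0 : y0 <= s by apply: ub.
have spos : 0 < s by apply: lt_le_trans hs0.
exists s; split.
  split => // e he.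
  have [d0 de] := small_delta he; set d := e / (e + 2) in d0 de.
  exists (x0, s + d); split.
    apply: contrapT => hk.
    have : s + d <= s by apply: ub; split => //; lra.
    lra.
  rewrite /dist2 /= subrr expr0n /= add0r.
  by have -> : s + d - s = d by ring.
move=> [_ [e [he hI]]].
have [d0 de] := small_delta he; set d := e / (e + 2) in d0 de.
have [y [hy hk] hlt] := sup_adherent d0 hsup.
have hys : y <= s by apply: ub.
apply: hk; apply: hI => //.
rewrite /dist2 /= subrr expr0n /= add0r.
have h1 : 0 <= s - y by lra.
have h2 : s - y < d by rewrite -/s in hlt; lra.
have -> : (y - s) ^+ 2 = (s - y) ^+ 2 by rewrite -sqrrN opprB.
apply: le_lt_trans de.
rewrite !expr2; apply: ler_pM => //; exact: ltW.
Qed.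

Variables alpha beta : R.
Hypothesis hlb : lb_bdK G alpha.
Hypothesis hub : ub_bdK G beta.

Lemma KL_proof z : 0 < z.2 -> z.1 < alpha \/ beta < z.1 -> Kset G z.
Proof.
move=> hz hout; apply: contrapT => hk.
case: z hz hk hout => x y /= hz hk hout.
have [y' hb] := bd_from_ray hz hk.
have h1 := hlb hb; have h2 := hub hb.
move: h1 h2 hout => /= h1 h2; case=> h; lra.
Qed.
End Sup.


Lemma abs_le_sq (x : R) : `|x| <= 1 + x ^+ 2.
Proof.
have hx : x ^+ 2 = `|x| ^+ 2 by rewrite real_normK ?num_real.
case: (lerP `|x| 1) => h; first by have := sqr_ge0 x; lra.
rewrite hx expr2.
have : `|x| * 1 < `|x| * `|x| by rewrite ltr_pM2l //; lra.
lra.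
Qed.

Lemma sq_sub (p q : R) : (p - q) ^+ 2 <= 2 * p ^+ 2 + 2 * q ^+ 2.
Proof.
have e : 2 * p ^+ 2 + 2 * q ^+ 2 - (p - q) ^+ 2 = (p + q) ^+ 2 by ring.
have := sqr_ge0 (p + q); lra.
Qed.

Lemma trunc_close (s t : R) : 0 <= s -> 0 <= t -> Num.trunc s = Num.trunc t -> `|s - t| < 1.
Proof.
move=> hs ht e.
have /andP [s1 s2] := truncn_itv hs; have /andP [t1 t2] := truncn_itv ht.
rewrite e in s1 s2.
rewrite -natr1 in s2 t2.
rewrite ltr_norml; apply/andP; split; lra.
Qed.

Lemma pigeon (C d : R) (a b c e : nat -> R) : 0 < d ->
  (forall k, `|a k| <= C /\ `|b k| <= C /\ `|c k| <= C /\ `|e k| <= C) ->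
  exists i j, i <> j /\ `|a i - a j| < d /\ `|b i - b j| < d /\
    `|c i - c j| < d /\ `|e i - e j| < d.
Proof.
move=> hd hC.
have C0 : 0 <= C by have [h _] := hC 0%N; apply: le_trans h.
pose M := Num.trunc (2 * C / d).
pose idx (x : R) := Num.trunc ((x + C) / d).
have idx_ge : forall x, `|x| <= C -> 0 <= (x + C) / d.
  move=> x hx; apply: divr_ge0; last exact: ltW.
  by move: hx; rewrite ler_norml => /andP [h1 h2]; lra.
have idx_le : forall x, `|x| <= C -> (idx x <= M)%N.
  move=> x hx; apply: le_truncn; rewrite ler_pM2r ?invr_gt0 //.
  by move: hx; rewrite ler_norml => /andP [h1 h2]; lra.
have close : forall x y, `|x| <= C -> `|y| <= C -> idx x = idx y -> `|x - y| < d.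
  move=> x y hx hy hxy.
  have := trunc_close (idx_ge _ hx) (idx_ge _ hy) hxy.
  have -> : (x + C) / d - (y + C) / d = (x - y) / d by field; rewrite gt_eqF.
  rewrite normrM (gtr0_norm (x := d^-1)) ?invr_gt0 // => h.
  by move: h; rewrite ltr_pdivrMr // mul1r.
pose f (k : 'I_(#|{: ('I_M.+1 * 'I_M.+1) * ('I_M.+1 * 'I_M.+1)}|).+1) :=
  ((inord (idx (a k)) : 'I_M.+1, inord (idx (b k)) : 'I_M.+1),
   (inord (idx (c k)) : 'I_M.+1, inord (idx (e k)) : 'I_M.+1)).
have : ~~ injectiveb f.
  apply/negP => /injectiveP inj; have := leq_card f inj; rewrite card_ord.
  by rewrite ltnn.
move=> /injectivePn [k1 [k2 hne hf]].
exists k1, k2; split; first by move=> h; move/eqP: hne; apply; apply: val_inj.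
have [ha1 [hb1 [hc1 he1]]] := hC k1; have [ha2 [hb2 [hc2 he2]]] := hC k2.
move: hf; rewrite /f => -[] /(congr1 (@nat_of_ord _)) ea /(congr1 (@nat_of_ord _)) eb /(congr1 (@nat_of_ord _)) ec /(congr1 (@nat_of_ord _)) ee.
move: ea eb ec ee; rewrite !inordK ?ltnS ?idx_le // => ea eb ec ee.
by split; [|split; [|split]]; apply: close.
Qed.


Lemma im_cz g z : mdet g = 1 -> 0 < z.2 -> (act g z).2 * cz_d2 g z = z.2.
Proof.
move=> hd hz; have hc := cz_pos hd hz.
rewrite act2 hd mul1r divfK //; rewrite gt_eqF //.
Qed.

Lemma top_ident g z : mdet g = 1 -> 0 < z.2 ->
  (ma g * z.1 + mb g) ^+ 2 + (ma g * z.2) ^+ 2 = dist2 (act g z) (0, 0) * cz_d2 g z.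
Proof.
move=> hd hz; have hc := cz_pos hd hz.
move: hc; rewrite /dist2 /act /cz_d2 /mdet /= => hc.
field; exact: lt0r_neq0 hc.
Qed.

Lemma two_term (p q r s C dd e : R) : `|p| <= C -> `|q| < dd -> `|r| <= C -> `|s| < dd ->
  0 < e -> 0 <= C -> dd = e / (4 * C + 4) -> `|p * q - r * s| < e.
Proof.
move=> hp hq hr hs he hC hdd.
have h4 : 0 < 4 * C + 4 by lra.
have hd0 : 0 <= dd by apply: le_trans (normr_ge0 q) (ltW hq).
apply: le_lt_trans (ler_normB _ _) _.
rewrite !normrM.
have h1 : `|p| * `|q| <= C * dd by apply: ler_pM => //; exact: ltW.
have h2 : `|r| * `|s| <= C * dd by apply: ler_pM => //; exact: ltW.
have h3 : 2 * (C * dd) < e.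
  rewrite hdd mulrA mulrA ltr_pdivrMr // ; nra.
lra.
Qed.

Section LemL.
Variable G : mat R -> Prop.
Hypothesis hG : psl_subgroup G.
Hypothesis hdisc : discrete G.
Hypothesis hnolim : ~ limit_point_inf G.
Variables (u : nat -> mat R) (z0 : R * R) (eta : R).
Hypothesis hu : forall k, G (u k).
Hypothesis hinj : injective u.
Hypothesis hz0 : 0 < z0.2.
Hypothesis heta : 0 < eta.
Hypothesis him : forall k, eta <= (act (u k) z0).2.

Let D k := dist2 (act (u k) z0) (0, 0).

Lemma L_unb : (forall B, exists k, B < D k) -> False.
Proof.
move=> hB; have [p hp] := choice hB.
pose w := fix w (j : nat) := if j is j'.+1 then p (D (w j') + 1) else p 0.
have hstep : forall j, D (w j) + 1 < D (w j.+1) by move=> j; exact: hp.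
have hgt : forall j, j%:R < D (w j).
  elim=> [|j IH]; first exact: hp.
  by rewrite -natr1; apply: lt_trans (hstep j); rewrite ltrD2r.
have hmono : forall i j, (i < j)%N -> D (w i) < D (w j).
  move=> i; elim=> [//|j IH].
  rewrite ltnS leq_eqVlt => /orP [/eqP ->|/IH h]; first by have := hstep j; lra.
  by apply: lt_trans h _; have := hstep j; lra.
apply: hnolim; exists z0; split => //; exists (fun n => u (w n)); split => //; split.
  move=> i j /= e.
  have eD : D (w i) = D (w j) by rewrite /D e.
  case: (ltngtP i j) => // h; exfalso; [have := hmono _ _ h|have := hmono _ _ h]; rewrite eD; lra.
move=> M; exists (Num.trunc `|M|).+1 => n hn.
apply: le_lt_trans (hgt n).
apply: le_trans (ler_norm M) _.
apply: ltW; apply: lt_le_trans (truncnS_gt _) _.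
by rewrite ler_nat.
Qed.

Lemma L_bdd : (exists B, forall k, D k <= B) -> False.
Proof.
move=> [B hB].
have hdet : forall k, mdet (u k) = 1 by move=> k; apply: (Gdet hG).
set x0 := z0.1; set y0 := z0.2.
have hD0 : forall k, 0 <= D k by move=> k; rewrite /D /dist2 addr_ge0 // sqr_ge0.
have B0 : 0 <= B by apply: le_trans (hB 0%N).
pose P := y0 / eta. pose Ps := P / y0 ^+ 2. pose Q := B * P. pose Qs := Q / y0 ^+ 2.
have y2 : 0 < y0 ^+ 2 by rewrite exprn_gt0.
have P0 : 0 <= P by rewrite divr_ge0 // ltW.
have Ps0 : 0 <= Ps by rewrite divr_ge0 // ltW.
have Q0 : 0 <= Q by rewrite mulr_ge0.
have Qs0 : 0 <= Qs by rewrite divr_ge0 // ltW.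
have x2 : 0 <= x0 ^+ 2 by rewrite sqr_ge0.
pose S := 2 * P + 2 * (Ps * x0 ^+ 2) + Ps + 2 * Q + 2 * (Qs * x0 ^+ 2) + Qs.
have hPx : 0 <= Ps * x0 ^+ 2 by rewrite mulr_ge0.
have hQx : 0 <= Qs * x0 ^+ 2 by rewrite mulr_ge0.
have bnd : forall k, ma (u k) ^+ 2 <= S /\ mb (u k) ^+ 2 <= S /\ mc (u k) ^+ 2 <= S /\ md (u k) ^+ 2 <= S.
  move=> k.
  have hcz := cz_pos (hdet k) hz0.
  have hczP : cz_d2 (u k) z0 <= P.
    rewrite /P ler_pdivlMr //.
    have := im_cz (hdet k) hz0; rewrite -/y0 => <-.
    by rewrite mulrC ler_pM2r // him.
  have htop := top_ident (hdet k) hz0; rewrite -/x0 -/y0 in htop.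
  have hQ : (ma (u k) * x0 + mb (u k)) ^+ 2 + (ma (u k) * y0) ^+ 2 <= Q.
    by rewrite htop /Q; apply: ler_pM; [exact: hD0|exact: ltW|exact: hB|exact: hczP].
  move: hczP; rewrite /cz_d2 -/x0 -/y0 => hczP.
  set a := ma (u k) in hQ *; set b := mb (u k) in hQ *; set c := mc (u k) in hczP *; set d := md (u k) in hczP *.
  have hc2 : c ^+ 2 <= Ps.
    rewrite /Ps ler_pdivlMr // -exprMn.
    by have := sqr_ge0 (c * x0 + d); lra.
  have ha2 : a ^+ 2 <= Qs.
    rewrite /Qs ler_pdivlMr // -exprMn.
    by have := sqr_ge0 (a * x0 + b); lra.
  have hcx : (c * x0) ^+ 2 <= Ps * x0 ^+ 2 by rewrite exprMn ler_wpM2r.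
  have hax : (a * x0) ^+ 2 <= Qs * x0 ^+ 2 by rewrite exprMn ler_wpM2r.
  have hd2 : d ^+ 2 <= 2 * P + 2 * (Ps * x0 ^+ 2).
    have := sq_sub (c * x0 + d) (c * x0).
    have -> : c * x0 + d - c * x0 = d by ring.
    have := sqr_ge0 (c * y0); have := sqr_ge0 (c * x0 + d). lra.
  have hb2 : b ^+ 2 <= 2 * Q + 2 * (Qs * x0 ^+ 2).
    have := sq_sub (a * x0 + b) (a * x0).
    have -> : a * x0 + b - a * x0 = b by ring.
    have := sqr_ge0 (a * y0); have := sqr_ge0 (a * x0 + b). lra.
  have := sqr_ge0 a; have := sqr_ge0 b; have := sqr_ge0 c; have := sqr_ge0 d.
  rewrite /S; split; [|split; [|split]]; lra.
pose C := 1 + S.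
have C0 : 0 <= C by rewrite /C /S; lra.
have hC : forall k, `|ma (u k)| <= C /\ `|mb (u k)| <= C /\ `|mc (u k)| <= C /\ `|md (u k)| <= C.
  move=> k; have [h1 [h2 [h3 h4]]] := bnd k.
  by split; [|split; [|split]]; (apply: le_trans (abs_le_sq _) _; rewrite /C lerD2l).
have [e [he hd]] := hdisc.
have h4 : 0 < 4 * C + 4 by lra.
pose dd := e / (4 * C + 4).
have dd0 : 0 < dd by rewrite divr_gt0.
have [i [j [hij [ea [eb [ec ed]]]]]] := pigeon dd0 hC.
pose g := mmul (minv (u i)) (u j).
have Gg : G g by apply: (Gmul hG); [apply: (Ginv hG)|].
have gne : g <> mid.
  move=> h; apply: hij; apply: hinj.
  have : mmul (u i) g = u j by rewrite /g mmulA mulmV ?hdet // mul1m.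
  by rewrite h mulm1.
apply: (hd g Gg gne).
have [ha [hb [hc hdd]]] := hC i.
have di := hdet i; move: di; rewrite /mdet => di.
rewrite distrC in ea; rewrite distrC in eb; rewrite distrC in ec; rewrite distrC in ed.
split.
- have -> : ma g - 1 = md (u i) * (ma (u j) - ma (u i)) - mb (u i) * (mc (u j) - mc (u i)).
    by rewrite /g /= -di; ring.
  by apply: (two_term (C:=C) (dd:=dd)).
- have -> : mb g = md (u i) * (mb (u j) - mb (u i)) - mb (u i) * (md (u j) - md (u i)).
    by rewrite /g /=; ring.
  by apply: (two_term (C:=C) (dd:=dd)).
- have -> : mc g = ma (u i) * (mc (u j) - mc (u i)) - mc (u i) * (ma (u j) - ma (u i)).
    by rewrite /g /=; ring.
  by apply: (two_term (C:=C) (dd:=dd)).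
- have -> : md g - 1 = ma (u i) * (md (u j) - md (u i)) - mc (u i) * (mb (u j) - mb (u i)).
    by rewrite /g /= -di; ring.
  by apply: (two_term (C:=C) (dd:=dd)).
Qed.

Lemma L_false : False.
Proof.
have [hb|hnb] := pselect (exists B, forall k, D k <= B); first exact: L_bdd.
apply: L_unb => B; apply: contrapT => hno; apply: hnb; exists B => k.
by rewrite leNgt; apply/negP => h; apply: hno; exists k.
Qed.
End LemL.

Section HK.
Variable G : mat R -> Prop.
Hypothesis hG : psl_subgroup G.
Hypothesis hdisc : discrete G.
Hypothesis hnolim : ~ limit_point_inf G.
Hypothesis hnopar : forall g, G g -> ~ parabolic g.

Lemma notK_wit x y : 0 < y -> ~ Kset G (x, y) -> exists g, GN G g /\ cz_d2 g (x, y) <= 1.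
Proof.
move=> hy hK; apply: contrapT => hno; apply: hK; split => // g hg hn; split => //.
rewrite ltNge; apply/negP => hle; apply: hno; exists g; split => //.
Qed.

Lemma inj_by_dec (f : nat -> R) : (forall k, f k.+1 < f k) -> injective f.
Proof.
move=> hf.
have mono : forall i j, (i < j)%N -> f j < f i.
  move=> i; elim=> [//|j IH].
  rewrite ltnS leq_eqVlt => /orP [/eqP ->|/IH h]; first exact: hf.
  exact: lt_trans (hf j) h.
move=> i j e; case: (ltngtP i j) => // h; exfalso;
  have := mono _ _ h; rewrite e ltxx //.
Qed.

Lemma C0_false g : GN G g -> mc g = 0 -> md g ^+ 2 <= 1 -> False.
Proof.
move=> [hg hn] hc hd2.
have hdet := Gdet hG hg.
have had : ma g * md g = 1 by move: hdet; rewrite /mdet hc mulr0 subr0.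
have d0 : md g != 0 by apply/eqP => d0; move: had; rewrite d0 mulr0 => /eqP; rewrite eq_sym oner_eq0.
have [h1|h1] := eqVneq (md g ^+ 2) 1.
  apply: (hnopar hg); split => //.
  move/eqP: h1; rewrite sqrf_eq1 => /orP [] /eqP hd; rewrite hd in had; move: had.
    rewrite mulr1 => ->; rewrite hd ger0_norm; lra.
  rewrite mulrN1 => /eqP; rewrite eqr_oppLR => /eqP ->; rewrite hd -opprD normrN ger0_norm; lra.
have hlt : md g ^+ 2 < 1 by rewrite lt_neqAle h1 hd2.
pose p k := iter k (mmul g) mid.
have hp : forall k, [/\ G (p k), mc (p k) = 0 & md (p k) = md g ^+ k].
  elim=> [|k [h2 h3 h4]] /=; first by split => //; case: hG.
  split; first by apply: (Gmul hG).
    by rewrite /= hc h3; ring.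
  by rewrite /= hc h4 exprS; ring.
apply: (L_false hG hdisc hnolim (u := p) (z0 := (0, 1)) (eta := 1)) => //.
- by move=> k; case: (hp k).
- move=> i j e.
  have : md (p i) = md (p j) by rewrite e.
  case: (hp i) => _ _ ->; case: (hp j) => _ _ -> e2.
  have : (md g ^+ 2) ^+ i = (md g ^+ 2) ^+ j by rewrite -!exprM mulnC exprM e2 -exprM mulnC exprM.
  by apply: ieexprIn; rewrite ?exprn_even_gt0.
- move=> k; case: (hp k) => hk hck hdk.
  rewrite act2 (Gdet hG hk) /cz_d2 hck hdk /= !mul0r add0r expr0n /= addr0 mul1r.
  rewrite ler_pdivlMr ?mul1r; last by rewrite exprn_even_gt0 // expf_neq0.
  by rewrite -exprM mulnC exprM exprn_ile1 // sqr_ge0.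
Qed.

Lemma HighK x : exists Y : R, forall y, Y <= y -> Kset G (x, y).
Proof.
apply: contrapT => hno.
have hw : forall Y : R, exists y, Y <= y /\ ~ Kset G (x, y).
  move=> Y; apply: contrapT => h; apply: hno; exists Y => y hy.
  by apply: contrapT => hk; apply: h; exists y.
have hw2 : forall n : nat, exists g, GN G g /\ mc g ^+ 2 * n.+1%:R ^+ 2 <= 1 /\ cz_d2 g (x, 1) <= 1.
  move=> n; have [y [hy hk]] := hw n.+1%:R.
  have hn1 : 1 <= n.+1%:R :> R by rewrite ler1n.
  have ypos : 0 < y by lra.
  have [g [hg hle]] := notK_wit ypos hk.
  exists g; split => //.
  move: hle; rewrite /cz_d2 /= => hle.
  have y2 : n.+1%:R ^+ 2 <= y ^+ 2 by rewrite !expr2; apply: ler_pM => //; lra.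
  have y1 : 1 <= y ^+ 2 by have := exprn_ege1 2 hn1; lra.
  have c2 : 0 <= mc g ^+ 2 by rewrite sqr_ge0.
  have e1 : mc g ^+ 2 * n.+1%:R ^+ 2 <= mc g ^+ 2 * y ^+ 2 by rewrite ler_wpM2l.
  have e2 : mc g ^+ 2 * 1 <= mc g ^+ 2 * y ^+ 2 by rewrite ler_wpM2l.
  have := sqr_ge0 (mc g * x + md g).
  rewrite mulr1 exprMn in hle *; rewrite mulr1 in e2.
  split; lra.
have [hc0|hnc0] := pselect (exists g, GN G g /\ mc g = 0 /\ md g ^+ 2 <= 1).
  by have [g [hg [hc hd]]] := hc0; apply: (C0_false hg hc hd).
have [f hf] := choice hw2.
have fc : forall n, mc (f n) != 0.
  move=> n; apply/eqP => hc; apply: hnc0; exists (f n); split; first by case: (hf n).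
  split => //; case: (hf n) => _ [_ h]; move: h; rewrite /cz_d2 hc /= !mul0r add0r expr0n /= addr0 //.
pose N (c : R) := Num.trunc (`|c|^-1).
pose v := fix v (k : nat) := if k is k'.+1 then N (mc (f (v k'))) else 0%N.
pose uu k := f (v k).
have dec : forall k, mc (uu k.+1) ^+ 2 < mc (uu k) ^+ 2.
  move=> k; rewrite /uu /=.
  set c := mc (f (v k)).
  have cn0 : c != 0 by apply: fc.
  have [_ [h1 _]] := hf (N c).
  have hN : `|c|^-1 < (N c).+1%:R by apply: truncnS_gt.
  have ac : 0 < `|c| by rewrite normr_gt0.
  have t1 : 1 < `|c| * (N c).+1%:R by rewrite -ltr_pdivrMl // mulr1.
  have t2 : 1 < (`|c| * (N c).+1%:R) ^+ 2.
    move: t1; set t := `|c| * _ => t1.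
    have t0 : 0 < t by lra.
    have : t * 1 < t * t by rewrite ltr_pM2l.
    rewrite expr2; lra.
  move: t2; rewrite exprMn real_normK ?num_real // => t2.
  have np : 0 < (N c).+1%:R ^+ 2 :> R by rewrite exprn_gt0 // ltr0n.
  by rewrite -(ltr_pM2r np); lra.
have inj : injective uu.
  move=> i j e; apply: (inj_by_dec dec); by rewrite /= e.
apply: (L_false hG hdisc hnolim (u := uu) (z0 := (x, 1)) (eta := 1)) => //.
- by move=> k; case: (hf (v k)) => [[]].
- move=> k; case: (hf (v k)) => [[hg _] [_ h]].
  have hcz := cz_pos (Gdet hG hg) (z := (x, 1)) ltr01.
  rewrite act2 (Gdet hG hg) /= mul1r ler_pdivlMr // mul1r.
  exact: h.
Qed.
End HK.
End S.

Unset Implicit Arguments.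
Set Strict Implicit.

Theorem lemma4p6 (R : realType) (G : mat R -> Prop)
  (hF : fuchsian G)
  (hgf : geometrically_finite G)
  (hnc : non_cocompact G)
  (hhyp : exists g, G g /\ hyperbolic g)
  (hnopar : forall g, G g -> ~ parabolic g)
  (harea : infinite_area G)
  (hord : ordinary_nbhd_inf G)
  (alpha beta : R)
  (halpha : lb_bdK G alpha /\ forall a, lb_bdK G a -> a <= alpha)
  (hbeta : ub_bdK G beta /\ forall b, ub_bdK G b -> beta <= b)
  (alpha' beta' : R) (ha' : alpha' < alpha) (hb' : beta < beta') :
  forall g : mat R,
    (Gamma_W G (beta' - alpha') g /\ fixes_inf g) <->
    exists n : int, g = mpow (tmat (beta' - alpha')) n \/
                    g = mneg (mpow (tmat (beta' - alpha')) n).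
Proof.
case: hF => hG hdisc.
have [M [hnolim _]] := hord.
have HK := HighK hG hdisc hnolim hnopar.
have KL := KL_proof HK halpha.1 hbeta.1.
move=> g; split.
  move=> [hW hfix].
  case: (gen_NF hG hW) => [[n [->|->]]|[p [q [u [hu e]]]]].
  - by exists n; left; rewrite mpowT.
  - by exists n; right; rewrite mpowT.
  exfalso; apply: (NA_nofix hG ha' hb' (erefl _) KL hu).
  move: hfix; rewrite /fixes_inf e /=.
  have -> : 0 * (ma u * 1 + mb u * 0) + 1 * (mc u * 1 + md u * 0) = mc u by ring.
  by [].
move=> [n [->|->]]; rewrite mpowT; split.
- by case: (T_in_W G (beta' - alpha') n).
- by [].
- by case: (T_in_W G (beta' - alpha') n).
- by rewrite /fixes_inf /= oppr0.
Qed.
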